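(* A commutative ring $A$ with identity is weak completely normal if and only if for any two non-comparable prime ideals $P, P'$ of $A$, $\operatorname{cl}_{\operatorname{spec} A}\{P\}\cap\operatorname{cl}_{\operatorname{spec} A}\{P'\}=\emptyset$.
   Context: All rings are commutative with identity; subrings contain the identity. $\operatorname{spec} A$ is the set of prime ideals of $A$ with the Zariski topology (so $\operatorname{cl}\{P\}$ is the set of primes containing $P$). A subring $A$ of a ring $B$ is a weak completely normal subring of $B$ if for any two distinct maximal ideals $M\neq M'$ of $B$ such that $M\cap A$ and $M'\cap A$ are non-comparable, $\operatorname{cl}_{\operatorname{spec} A}\{M\cap A\}\cap \operatorname{cl}_{\operatorname{spec} A}\{M'\cap A\}=\emptyset$. A ring $A$ is weak completely normal if it is a weak completely normal subring of every ring containing it as a subring. *)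

(* Defs.v *)
From HB Require Import structures.
From mathcomp Require Import all_boot all_order all_algebra.
Set Implicit Arguments. Unset Strict Implicit. Unset Printing Implicit Defensive.
Import GRing.Theory.
Local Open Scope ring_scope.

Definition is_ideal (R : comNzRingType) (I : R -> Prop) : Prop :=
  I 0 /\ (forall x y, I x -> I y -> I (x + y)) /\ (forall a x, I x -> I (a * x)).

Definition is_prime_ideal (R : comNzRingType) (P : R -> Prop) : Prop :=
  is_ideal P /\ ~ P 1 /\ (forall x y, P (x * y) -> P x \/ P y).

Definition is_maximal_ideal (R : comNzRingType) (M : R -> Prop) : Prop :=
  is_ideal M /\ ~ M 1 /\
  (forall J : R -> Prop, is_ideal J -> (forall x, M x -> J x) ->
     (forall x, J x <-> M x) \/ J 1).

Definition ideal_sub (R : comNzRingType) (I J : R -> Prop) : Prop :=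
  forall x, I x -> J x.

(* cl_{spec A}{P} : the primes of A containing P *)
Definition spec_closure (R : comNzRingType) (P : R -> Prop) (Q : R -> Prop) : Prop :=
  is_prime_ideal Q /\ ideal_sub P Q.

Definition closures_disjoint (R : comNzRingType) (P P' : R -> Prop) : Prop :=
  forall Q : R -> Prop, ~ (spec_closure P Q /\ spec_closure P' Q).

Definition non_comparable (R : comNzRingType) (P P' : R -> Prop) : Prop :=
  ~ ideal_sub P P' /\ ~ ideal_sub P' P.

Definition contract (A B : comNzRingType) (f : A -> B) (M : B -> Prop) : A -> Prop :=
  fun a => M (f a).

Definition weak_cn_subring (A B : comNzRingType) (f : {rmorphism A -> B}) : Prop :=
  forall M M' : B -> Prop,
    is_maximal_ideal M -> is_maximal_ideal M' ->
    ~ (forall x, M x <-> M' x) ->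
    non_comparable (contract f M) (contract f M') ->
    closures_disjoint (contract f M) (contract f M').

Definition weak_completely_normal (A : comNzRingType) : Prop :=
  forall (B : comNzRingType) (f : {rmorphism A -> B}), injective f ->
    weak_cn_subring f.

(* Main.v *)
Require Import Defs.
From HB Require Import structures.
From mathcomp Require Import all_boot all_order all_algebra.
From mathcomp Require Import boolp.
From Stdlib Require Import Classical.
From mathcomp Require Import ring.
Set Implicit Arguments. Unset Strict Implicit. Unset Printing Implicit Defensive.
Import GRing.Theory.
Local Open Scope ring_scope.
Local Open Scope quotient_scope.

Section Res.
Variables (A : comNzRingType) (P : A -> Prop) (hP : is_prime_ideal P).

Definition Pb : A -> bool := fun a => `[< P a >].

Lemma Pb_closed : idealr_closed Pb.
Proof.
case: hP => [[P0 [PD PM]] [P1 Pp]]; split.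
- by rewrite /Pb; apply/asboolP.
- by rewrite /Pb; apply/asboolP.
- move=> a u v /asboolP hu /asboolP hv; apply/asboolP; exact: PD (PM _ _ hu) hv.
Qed.

HB.instance Definition _ := isIdealr.Build A Pb Pb_closed.

Lemma Pb_prime : prime_idealr_closed Pb.
Proof.
case: hP => _ [_ Pp] u v /asboolP /Pp [h|h]; apply/orP; [left|right]; exact/asboolP.
Qed.

HB.instance Definition _ := isPrimeIdealrClosed.Build A Pb Pb_prime.

Definition PbI : prime_idealr A := PrimeIdealr.clone A Pb _.
Definition Q := {ideal_quot PbI}.
HB.instance Definition _ := GRing.ComNzRing.on Q.

Definition unitQ : pred Q := fun x => `[< exists y, y * x = 1 >].
Definition invQ (x : Q) : Q :=
  match pselect (exists y, y * x = 1) with left h => proj1_sig (cid h) | right _ => x end.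

Lemma mulVQ : {in unitQ, left_inverse 1 invQ *%R}.
Proof.
move=> x /asboolP hx; rewrite /invQ; case: pselect => h; last by case: (h hx).
by case: (cid h).
Qed.
Lemma unitPlQ : forall x y : Q, y * x = 1 -> unitQ x.
Proof. by move=> x y h; apply/asboolP; exists y. Qed.
Lemma invr_outQ : {in [predC unitQ], invQ =1 id}.
Proof.
move=> x; rewrite inE /= => /asboolP hx; rewrite /invQ; case: pselect => // h.
Qed.

HB.instance Definition _ := GRing.ComNzRing_hasMulInverse.Build Q mulVQ unitPlQ invr_outQ.

Lemma Q_dom : GRing.integral_domain_axiom Q.
Proof. move=> x y; exact: (@Quotient.rquot_IdomainAxiom A PbI x y). Qed.

HB.instance Definition _ := GRing.ComUnitRing_isIntegral.Build Q Q_dom.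

Definition F := {fraction Q}.
Definition pi (a : A) : Q := \pi_{ideal_quot PbI} a.
Lemma pi_zmod : zmod_morphism pi.
Proof. move=> x y; rewrite /pi. exact: rmorphB. Qed.
Lemma pi_mon : monoid_morphism pi.
Proof. split; rewrite /pi; [exact: rmorph1 | move=> x y; exact: rmorphM]. Qed.
HB.instance Definition _ := GRing.isZmodMorphism.Build A Q pi pi_zmod.
HB.instance Definition _ := GRing.isMonoidMorphism.Build A Q pi pi_mon.
Definition g (a : A) : F := FracField.tofrac (pi a).
Lemma g_zmod : zmod_morphism g.
Proof. move=> x y; rewrite /g rmorphB. exact: rmorphB. Qed.
Lemma g_mon : monoid_morphism g.
Proof. split; rewrite /g; [by rewrite rmorph1 rmorph1 | move=> x y; by rewrite !rmorphM]. Qed.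
HB.instance Definition _ := GRing.isZmodMorphism.Build A F g g_zmod.
HB.instance Definition _ := GRing.isMonoidMorphism.Build A F g g_mon.
Lemma g0 a : g a = 0 <-> P a.
Proof.
rewrite /g; split.
- move/eqP; rewrite -(rmorph0 (@FracField.tofrac Q)) tofrac_eq /pi.
  rewrite -(rmorph0 (\pi_{ideal_quot PbI})) -Quotient.idealrBE subr0 => /asboolP //.
- move=> h; apply/eqP; rewrite -(rmorph0 (@FracField.tofrac Q)) tofrac_eq /pi.
  rewrite -(rmorph0 (\pi_{ideal_quot PbI})) -Quotient.idealrBE subr0; exact/asboolP.
Qed.
End Res.

Lemma residue (A : comNzRingType) (P : A -> Prop) : is_prime_ideal P ->
  exists (F : fieldType) (g : {rmorphism A -> F}), forall a, g a = 0 <-> P a.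
Proof. move=> hP; exists (F hP), (g hP); exact: g0. Qed.

Lemma max_prime (R : comNzRingType) (M : R -> Prop) : is_maximal_ideal M -> is_prime_ideal M.
Proof.
move=> [[M0 [MD MM]] [M1 Mmax]]; split; first by [].
split; first by [].
move=> x y Mxy; case: (classic (M x)) => hx; [by left | right].
pose J := fun z => exists a m, M m /\ z = a * x + m.
have hJ : is_ideal J.
  split; first by exists 0, 0; split => //; rewrite mul0r addr0.
  split.
  - move=> u v [a [m [hm ->]]] [a' [m' [hm' ->]]]; exists (a + a'), (m + m'); split.
      exact: MD.
    by rewrite mulrDl -!addrA; congr (_ + _); rewrite addrCA.
  - move=> c u [a [m [hm ->]]]; exists (c * a), (c * m); split; first exact: MM.
    by rewrite mulrDr mulrA.
have sub : forall z, M z -> J z by move=> z hz; exists 0, z; rewrite mul0r add0r.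
case: (Mmax J hJ sub) => [hE|[a [m [hm h1]]]].
  exfalso; apply: hx; apply/hE; exists 1, 0; rewrite mul1r addr0; split => //.
have -> : y = a * (x * y) + y * m.
  transitivity (y * 1); first by rewrite mulr1.
  rewrite h1; ring.
apply: (MD); exact: (MM).
Qed.

Lemma contract_prime (A B : comNzRingType) (f : {rmorphism A -> B}) (M : B -> Prop) :
  is_prime_ideal M -> is_prime_ideal (contract f M).
Proof.
move=> [[M0 [MD MM]] [M1 Mp]]; rewrite /contract; split; [split|split].
- by rewrite rmorph0.
- split; first by move=> x y hx hy; rewrite rmorphD; exact: MD.
  by move=> a x hx; rewrite rmorphM; exact: MM.
- by rewrite rmorph1.
- by move=> x y; rewrite rmorphM; exact: Mp.
Qed.

Section Prod.
Variables (A : comNzRingType) (F F' : fieldType) (g : {rmorphism A -> F}) (g' : {rmorphism A -> F'}).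
Definition B : comNzRingType := ((A * F) * F')%type.
Definition fB (a : A) : B := ((a, g a), g' a).
Lemma fB_zmod : zmod_morphism fB.
Proof. by move=> x y; rewrite /fB !rmorphB. Qed.
Lemma fB_mon : monoid_morphism fB.
Proof. by split; rewrite /fB ?rmorph1 // => x y; rewrite !rmorphM. Qed.
HB.instance Definition _ := GRing.isZmodMorphism.Build A B fB fB_zmod.
HB.instance Definition _ := GRing.isMonoidMorphism.Build A B fB fB_mon.

Lemma fB_inj : injective fB.
Proof. by move=> x y [] . Qed.

Definition MB (b : B) : Prop := b.1.2 = 0.
Definition MB' (b : B) : Prop := b.2 = 0.

Lemma maxMB : is_maximal_ideal MB.
Proof.
rewrite /MB; split; [split|split].
- by [].
- split; first by move=> x y /= -> ->; rewrite addr0.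
  by move=> a x /= ->; rewrite mulr0.
- by move=> /= /eqP; rewrite oner_eq0.
- move=> J [J0 [JD JM]] sub.
  case: (classic (forall x, J x -> x.1.2 = 0)) => h.
    by left => x; split; [apply: h | apply: sub].
  right.
  have [b hb] := not_all_ex_not _ _ h.
  have Jb := not_imply_elim _ _ hb; have hb' := not_imply_elim2 _ _ hb.
  have J1 : J (((0, (b.1.2)^-1), 0) * b) by apply: JM.
  have J2 : J ((1, 0), 1) by apply: sub.
  have := JD _ _ J1 J2.
  have -> : ((0, (b.1.2)^-1), 0) * b + ((1, 0), 1) = (1 : B).
    case: b hb hb' {Jb J1} => [[b1 b2] b3] _ /= hb.
    have E : b2^-1 * b2 = 1 by rewrite mulVf //; exact/eqP.
    change (((0 * b1 + 1, b2^-1 * b2 + 0), 0 * b3 + 1) = ((1, 1), 1) :> B).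
    rewrite E !mul0r !add0r addr0.
    by [].
  by [].
Qed.

Lemma maxMB' : is_maximal_ideal MB'.
Proof.
rewrite /MB'; split; [split|split].
- by [].
- split; first by move=> x y /= -> ->; rewrite addr0.
  by move=> a x /= ->; rewrite mulr0.
- by move=> /= /eqP; rewrite oner_eq0.
- move=> J [J0 [JD JM]] sub.
  case: (classic (forall x, J x -> x.2 = 0)) => h.
    by left => x; split; [apply: h | apply: sub].
  right.
  have [b hb] := not_all_ex_not _ _ h.
  have Jb := not_imply_elim _ _ hb; have hb' := not_imply_elim2 _ _ hb.
  have J1 : J (((0, 0), (b.2)^-1) * b) by apply: JM.
  have J2 : J ((1, 1), 0) by apply: sub.
  have := JD _ _ J1 J2.
  have -> : ((0, 0), (b.2)^-1) * b + ((1, 1), 0) = (1 : B).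
    case: b hb hb' {Jb J1} => [[b1 b2] b3] _ /= hb.
    have E : b3^-1 * b3 = 1 by rewrite mulVf //; exact/eqP.
    change (((0 * b1 + 1, 0 * b2 + 1), b3^-1 * b3 + 0) = ((1, 1), 1) :> B).
    rewrite E !mul0r !add0r addr0.
    by [].
  by [].
Qed.
End Prod.


Theorem mainTheorem15 (A : comNzRingType) :
  weak_completely_normal A <->
  (forall P P' : A -> Prop, is_prime_ideal P -> is_prime_ideal P' ->
     non_comparable P P' -> closures_disjoint P P').
Proof.
split.
- move=> H P P' hP hP' [n1 n2] Q [[cQ sQ] [_ sQ']].
  have [F [g hg]] := residue hP; have [F' [g' hg']] := residue hP'.
  have neq : ~ (forall x, @MB A F F' x <-> @MB' A F F' x).
    move=> E; have := (E ((0, 0), 1)).1 erefl; rewrite /MB' /= => /eqP.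
    by rewrite oner_eq0.
  have nc : non_comparable (contract (fB g g') (@MB A F F')) (contract (fB g g') (@MB' A F F')).
    rewrite /contract /MB /MB' /fB /=; split.
    * move=> hs; apply: n1 => x /hg /hs /hg'; by [].
    * move=> hs; apply: n2 => x /hg' /hs /hg; by [].
  have HH := H _ (fB g g') (@fB_inj A F F' g g') (@MB A F F') (@MB' A F F') (@maxMB A F F') (@maxMB' A F F') neq nc Q.
  apply: HH.
  rewrite /contract /MB /MB' /fB /spec_closure /ideal_sub /=; split; split => //.
  * by move=> x /hg /sQ.
  * by move=> x /hg' /sQ'.
- move=> H B f finj M M' hM hM' neq nc Q [[cQ sQ] [_ sQ']].
  exact: (H _ _ (contract_prime f (max_prime hM)) (contract_prime f (max_prime hM')) nc Q
    (conj (conj cQ sQ) (conj cQ sQ'))).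
Qed.
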